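(* Let $\beta\in(0,2]$ and, on the open subset $U\subset H^3$ where the geodesic polar coordinates $(r,\theta,\phi)$ with $r>0$, $\theta\in(0,\pi)$ are valid (so $g_{H^3}=\mathrm{d}r^2+\sinh^2 r(\mathrm{d}\theta^2+\sin^2\theta\,\mathrm{d}\phi^2)$), define $$\mathcal{A}=\frac{\mathbf{i}}{2}\cos\theta\,\mathrm{d}\phi+\frac{2(\beta-1)\,\mathrm{e}^{2r}\sinh r}{\mathrm{e}^{4r}-(\beta-1)^2}\left(\mathbf{j}\sin\theta\,\mathrm{d}\phi-\mathbf{k}\,\mathrm{d}\theta\right),$$ $$\Phi=\frac{\mathbf{i}}{4}(1-\coth r)\,\frac{(\beta-1)^2(1-3\mathrm{e}^{2r})-\mathrm{e}^{6r}(1-3\mathrm{e}^{-2r})}{\mathrm{e}^{4r}-(\beta-1)^2}.$$ Then $(\Phi,\mathcal{A})$ satisfies the Bogomolny equations $\mathrm{d}_{\mathcal{A}}\Phi=-\ast_{H^3}\mathcal{F}$ on $U$, where $\mathcal{F}$ is the curvature of $\mathcal{A}$. Moreover $\|\Phi\|\to\tfrac12$ as $r\to\infty$.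
   Context: $\mathfrak{su}(2)$ is identified with the imaginary quaternions spanned by $\mathbf{i},\mathbf{j},\mathbf{k}$, with inner product $\langle X,Y\rangle=-\tfrac12\mathrm{Tr}(XY)$ (so $\|\mathbf{i}\|=1$). $\mathrm{d}_{\mathcal{A}}\Phi=\mathrm{d}\Phi+[\mathcal{A},\Phi]$ with $[X,Y]=XY-YX$, and $\mathcal{F}=\mathrm{d}\mathcal{A}+\mathcal{A}\wedge\mathcal{A}$. $\ast_{H^3}$ is the Hodge star of $g_{H^3}$ with orientation given by $\sinh^2 r\sin\theta\,\mathrm{d}r\wedge\mathrm{d}\theta\wedge\mathrm{d}\phi$. *)

(* Defs.v *)
From Stdlib Require Import Reals.
From Coquelicot Require Import Coquelicot.
Open Scope R_scope.

Record quat := Quat { q0 : R; q1 : R; q2 : R; q3 : R }.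

(* Hamilton product: i*j = k, j*k = i, k*i = j, i^2=j^2=k^2=-1 *)
Definition qmul (p q : quat) : quat :=
  Quat (q0 p * q0 q - q1 p * q1 q - q2 p * q2 q - q3 p * q3 q)
       (q0 p * q1 q + q1 p * q0 q + q2 p * q3 q - q3 p * q2 q)
       (q0 p * q2 q - q1 p * q3 q + q2 p * q0 q + q3 p * q1 q)
       (q0 p * q3 q + q1 p * q2 q - q2 p * q1 q + q3 p * q0 q).

Definition qsub (p q : quat) : quat :=
  Quat (q0 p - q0 q) (q1 p - q1 q) (q2 p - q2 q) (q3 p - q3 q).

(* An element of su(2): x1 i + x2 j + x3 k *)
Record su2 := Su2 { x1 : R; x2 : R; x3 : R }.

Definition toq (X : su2) : quat := Quat 0 (x1 X) (x2 X) (x3 X).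
Definition imq (p : quat) : su2 := Su2 (q1 p) (q2 p) (q3 p).

Definition su2_i : su2 := Su2 1 0 0.
Definition su2_j : su2 := Su2 0 1 0.
Definition su2_k : su2 := Su2 0 0 1.

Definition su2_add (X Y : su2) : su2 := Su2 (x1 X + x1 Y) (x2 X + x2 Y) (x3 X + x3 Y).
Definition su2_scal (a : R) (X : su2) : su2 := Su2 (a * x1 X) (a * x2 X) (a * x3 X).
Definition su2_opp (X : su2) : su2 := su2_scal (-1) X.
Definition su2_zero : su2 := Su2 0 0 0.

Definition brk (X Y : su2) : su2 := imq (qsub (qmul (toq X) (toq Y)) (qmul (toq Y) (toq X))).

(* <X,Y> = -1/2 Tr(XY); for the standard 2x2 complex representation of
   quaternions, Tr(q) = 2 * (real part of q), so <X,Y> = - Re(XY). *)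
Definition su2_inner (X Y : su2) : R := - q0 (qmul (toq X) (toq Y)).
Definition su2_norm (X : su2) : R := sqrt (su2_inner X X).

Inductive coord := Cr | Cth | Cph.

Definition inU (r th ph : R) : Prop := 0 < r /\ 0 < th < PI.

Definition fn := R -> R -> R -> su2.
(* su(2)-valued 1-forms: coefficient of d(x^c) *)
Definition form1 := coord -> fn.
(* su(2)-valued 2-forms: F a b is the coefficient of dx^a /\ dx^b (antisymmetric) *)
Definition form2 := coord -> coord -> fn.

Definition pd1 (g : R -> R -> R -> R) (c : coord) (r th ph : R) : R :=
  match c with
  | Cr => Derive (fun t => g t th ph) r
  | Cth => Derive (fun t => g r t ph) th
  | Cph => Derive (fun t => g r th t) ph
  end.

Definition pd (f : fn) (c : coord) : fn := fun r th ph =>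
  Su2 (pd1 (fun a b d => x1 (f a b d)) c r th ph)
      (pd1 (fun a b d => x2 (f a b d)) c r th ph)
      (pd1 (fun a b d => x3 (f a b d)) c r th ph).

Definition covD (A : form1) (Phi : fn) : form1 := fun c r th ph =>
  su2_add (pd Phi c r th ph) (brk (A c r th ph) (Phi r th ph)).

(* F = dA + A /\ A :  F_ab = d_a A_b - d_b A_a + [A_a, A_b] *)
Definition curv (A : form1) : form2 := fun a b r th ph =>
  su2_add (su2_add (pd (A b) a r th ph) (su2_opp (pd (A a) b r th ph)))
          (brk (A a r th ph) (A b r th ph)).

Definition gH3 (c : coord) (r th ph : R) : R :=
  match c with
  | Cr => 1
  | Cth => (sinh r) ^ 2
  | Cph => (sinh r) ^ 2 * (sin th) ^ 2
  end.

(* Hodge star of a diagonal metric on 2-forms, orientation dr/\dth/\dph: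
   ( *F )_c = sqrt(g_r g_th g_ph) / (g_a g_b) * F_ab  for (a,b,c) cyclic. *)
Definition cyc_pred (c : coord) : coord * coord :=
  match c with
  | Cr => (Cth, Cph)
  | Cth => (Cph, Cr)
  | Cph => (Cr, Cth)
  end.

Definition hodgeH3 (F : form2) : form1 := fun c r th ph =>
  let ab := cyc_pred c in
  su2_scal (sqrt (gH3 Cr r th ph * gH3 Cth r th ph * gH3 Cph r th ph)
            / (gH3 (fst ab) r th ph * gH3 (snd ab) r th ph))
           (F (fst ab) (snd ab) r th ph).

Definition bogomolny (Phi : fn) (A : form1) : Prop :=
  forall r th ph, inU r th ph ->
    forall c, covD A Phi c r th ph = su2_opp (hodgeH3 (curv A) c r th ph).

Definition coth (r : R) : R := cosh r / sinh r.

Definition Kfun (beta r : R) : R :=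
  2 * (beta - 1) * exp (2 * r) * sinh r / (exp (4 * r) - (beta - 1) ^ 2).

Definition Aconn (beta : R) : form1 := fun c r th ph =>
  match c with
  | Cr => su2_zero
  | Cth => su2_scal (- Kfun beta r) su2_k
  | Cph => su2_add (su2_scal (/ 2 * cos th) su2_i) (su2_scal (Kfun beta r * sin th) su2_j)
  end.

Definition Phifun (beta : R) : fn := fun r th ph =>
  su2_scal (/ 4 * (1 - coth r) *
            (((beta - 1) ^ 2 * (1 - 3 * exp (2 * r)) - exp (6 * r) * (1 - 3 * exp (- 2 * r)))
             / (exp (4 * r) - (beta - 1) ^ 2)))
           su2_i.

(* Main.v *)
Require Import Defs.
From Stdlib Require Import Reals Lra.
From Coquelicot Require Import Coquelicot.
Open Scope R_scope.

Definition fcoef (beta r : R) : R := / 4 * (1 - coth r) *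
            (((beta - 1) ^ 2 * (1 - 3 * exp (2 * r)) - exp (6 * r) * (1 - 3 * exp (- 2 * r)))
             / (exp (4 * r) - (beta - 1) ^ 2)).

Lemma expk (k : nat) r : exp (INR k * r) = exp r ^ k.
Proof. induction k. simpl. rewrite Rmult_0_l, exp_0; ring.
rewrite S_INR, Rmult_plus_distr_r, exp_plus, IHk, Rmult_1_l. simpl; ring. Qed.

Lemma e2 r : exp (2*r) = exp r ^ 2. Proof. replace (2*r) with (INR 2 * r) by (simpl; ring); apply expk. Qed.
Lemma e4 r : exp (4*r) = exp r ^ 4. Proof. replace (4*r) with (INR 4 * r) by (simpl; ring); apply expk. Qed.
Lemma e6 r : exp (6*r) = exp r ^ 6. Proof. replace (6*r) with (INR 6 * r) by (simpl; ring); apply expk. Qed.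
Lemma em2 r : exp (-2*r) = / exp r ^ 2. Proof. rewrite <- e2, <- exp_Ropp. f_equal; ring. Qed.
Lemma em1 r : exp (- r) = / exp r. Proof. apply exp_Ropp. Qed.

Lemma xgt1 r : 0 < r -> 1 < exp r.
Proof. intros; rewrite <- exp_0; apply exp_increasing; lra. Qed.

Lemma den_ne beta r : 0 < beta <= 2 -> 0 < r -> exp r ^ 4 - (beta - 1)^2 <> 0.
Proof. intros Hb Hr. pose proof (xgt1 r Hr). assert (1 < exp r ^ 4).
{ assert (1 < exp r ^ 2) by nra. nra. }
assert ((beta-1)^2 <= 1) by nra. lra. Qed.

Ltac toexp := unfold Kfun, fcoef, coth, sinh, cosh in *;
  rewrite ?e2, ?e4, ?e6, ?em2, ?em1 in *.

Lemma dK beta r : 0 < beta <= 2 -> 0 < r ->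
  is_derive (Kfun beta) r (-2 * Kfun beta r * fcoef beta r).
Proof. intros Hb Hr. pose proof (xgt1 r Hr). pose proof (den_ne beta r Hb Hr).
unfold Kfun, sinh. auto_derive.
- toexp. auto.
- toexp. set (X := exp r) in *. field. repeat split; nra.
Qed.

Lemma dF beta r : 0 < beta <= 2 -> 0 < r ->
  is_derive (fcoef beta) r ((/2 - 2 * Kfun beta r ^ 2) / sinh r ^ 2).
Proof. intros Hb Hr. pose proof (xgt1 r Hr). pose proof (den_ne beta r Hb Hr).
unfold fcoef, coth, sinh, cosh. auto_derive.
- toexp. set (X := exp r) in *.
  assert (0 < / X < 1). { split. apply Rinv_0_lt_compat; lra. rewrite <- Rinv_1. apply Rinv_lt_contravar; lra. }
  repeat split; nra.
- toexp. set (X := exp r) in *. field. repeat split; nra.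
Qed.


Lemma sinh_pos r : 0 < r -> 0 < sinh r.
Proof. intros Hr. pose proof (xgt1 r Hr). unfold sinh. rewrite em1.
assert (0 < / exp r < 1). { split. apply Rinv_0_lt_compat; lra. rewrite <- Rinv_1. apply Rinv_lt_contravar; lra. }
lra. Qed.

Lemma sqrt_lem s t : 0 < s -> 0 < t ->
  sqrt (1 * (s * (s * 1)) * (s * (s * 1) * (t * (t * 1)))) = s * s * t.
Proof. intros. replace (1 * (s * (s * 1)) * (s * (s * 1) * (t * (t * 1)))) with ((s*s*t)*(s*s*t)) by ring.
apply sqrt_square. apply Rmult_le_pos; [apply Rmult_le_pos|]; lra. Qed.

Ltac dstep beta r Hb Hr := match goal with |- context [Derive ?F ?x] =>
   lazymatch F with
   | (fun t => Kfun _ t) => fail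
   | (fun t => fcoef _ t) => fail
   | Kfun _ => fail
   | fcoef _ => fail
   | _ => erewrite (is_derive_unique F x); [| auto_derive;
      [ try exact (ex_intro _ _ (dK beta r Hb Hr)); try exact (ex_intro _ _ (dF beta r Hb Hr)) ..
      | reflexivity] ]
   end end.

Lemma bog beta : 0 < beta <= 2 -> bogomolny (Phifun beta) (Aconn beta).
Proof. intros Hb r th ph [Hr [Ht1 Ht2]] c.
change (Phifun beta) with (fun r (th ph : R) => su2_scal (fcoef beta r) su2_i).
pose proof (sinh_pos r Hr) as Hs. assert (Ht : 0 < sin th) by (apply sin_gt_0; lra).
destruct c; unfold covD, hodgeH3, curv, pd, pd1, brk; cbn -[Kfun fcoef Derive sqrt sinh sin cos];
 rewrite sqrt_lem by assumption;
 repeat dstep beta r Hb Hr; try exact I;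
 try change (Derive (fun x => Kfun beta x) r) with (Derive (Kfun beta) r);
 try change (Derive (fun x => fcoef beta x) r) with (Derive (fcoef beta) r);
 rewrite ?(is_derive_unique _ r _ (dK beta r Hb Hr)),
         ?(is_derive_unique _ r _ (dF beta r Hb Hr));
 unfold su2_add, su2_opp, su2_scal, imq, qsub, qmul, toq, su2_zero, su2_i, su2_j, su2_k; cbn -[Kfun fcoef sinh sin cos];
 f_equal.
all: try (field; lra).
Qed.

Definition gfun (beta u : R) : R :=
  / 2 * (1 - 3 * u + 3 * (beta-1)^2 * u^2 - (beta-1)^2 * u^3) / ((1 - u) * (1 - (beta-1)^2 * u^2)).
Definition hfun (beta u : R) : R := sqrt (gfun beta u * gfun beta u).

Lemma f_g beta r : 0 < beta <= 2 -> 0 < r -> fcoef beta r = gfun beta (exp (-2 * r)).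
Proof. intros Hb Hr. pose proof (xgt1 r Hr). pose proof (den_ne beta r Hb Hr).
unfold gfun. toexp. set (X := exp r) in *.
assert (0 < / X < 1). { split. apply Rinv_0_lt_compat; lra. rewrite <- Rinv_1. apply Rinv_lt_contravar; lra. }
assert ((beta-1)^2 <= 1) by nra.
field. repeat split; try nra.
Qed.

Lemma lim_part beta th ph : 0 < beta <= 2 ->
  is_lim (fun r => su2_norm (Phifun beta r th ph)) p_infty (/ 2).
Proof. intros Hb.
apply is_lim_ext_loc with (f := fun r => hfun beta (exp (-2 * r))).
{ exists 0. intros r Hr. unfold hfun, su2_norm, su2_inner. rewrite <- f_g by assumption.
  change (Phifun beta r th ph) with (su2_scal (fcoef beta r) su2_i). cbn -[fcoef]. f_equal. ring. }
apply (is_lim_comp (hfun beta) (fun r => exp (-2 * r)) p_infty (/2) 0).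
- assert (Hc : continuity_pt (hfun beta) 0).
  { apply continuity_pt_filterlim. apply (ex_derive_continuous (K:=R_AbsRing) (V:=R_NormedModule)). unfold hfun, gfun. auto_derive.
    assert (E1: forall a, (1 + - 0) * (1 + - (a * (0 * (0 * 1)))) = 1) by (intro; ring). rewrite !E1, Rinv_1. repeat split; try lra; try (ring_simplify; lra). }
  pose proof (is_lim_continuity _ _ Hc) as HL.
  replace (/2) with (hfun beta 0). exact HL.
  assert (G0: gfun beta 0 = /2) by (unfold gfun; field; lra).
  unfold hfun; rewrite G0. apply sqrt_square. lra.
- apply (is_lim_comp (fun y => exp y) (fun r => -2 * r) p_infty 0 m_infty).
  + exact is_lim_exp_m.
  + replace m_infty with (Rbar_mult (-2) p_infty).
    * apply is_lim_scal_l. apply is_lim_id.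
    * cbn. destruct (Rle_dec 0 (-2)) as [Hx|Hx]. exfalso; lra. reflexivity.
  + red. exists 0. intros r _. discriminate.
- red. exists 0. intros r _. intro E. apply Rbar_finite_eq in E. pose proof (exp_pos (-2 * r)). lra.
Qed.

Theorem mainTheorem2 (beta : R) (hbeta : 0 < beta <= 2) :
  bogomolny (Phifun beta) (Aconn beta) /\
  (forall th ph : R,
     is_lim (fun r => su2_norm (Phifun beta r th ph)) p_infty (/ 2)).
Proof.
  split.
  - apply bog; assumption.
  - intros th ph. apply lim_part; assumption.
Qed.
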